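(* Let $\mathcal{P}$ be a Prob-solvable loop with program variables $x_1,\ldots,x_m$, and let $M=\prod_{i=1}^m x_i^{\alpha_i}$ be any monomial (with $\alpha_i\in\mathbb{N}$) in the program variables. Then the sequence of expected values $E[M(n)]$, $n\ge 0$, is modeled by C-finite recurrences over E-variables: there is a finite set $\mathcal{S}$ of monomials in $x_1,\ldots,x_m$ containing $M$ such that, for every $N\in\mathcal{S}$, $E[N(n+1)]$ equals a linear combination, with constant coefficients, of the E-variables $E[N'(n)]$, $N'\in\mathcal{S}$, plus a constant. In particular higher-order (and mixed) moments of the program variables satisfy a system of linear recurrences with constant coefficients.
   Context: A Prob-solvable loop consists of an initialization assigning initial values (constants) to program variables $x_1,\ldots,x_m$, followed by a loop \texttt{while true do} whose body updates the variables in order $x_1,\ldots,x_m$ by probabilistic assignments of the form $x_i := a_i x_i + P_i(x_1,\ldots,x_{i-1})$ with probability $p_i$, and $x_i := b_i x_i + Q_i(x_1,\ldots,x_{i-1})$ with probability $1-p_i$, where $a_i,b_i$ are constants, $p_i\in[0,1]$, and $P_i,Q_i$ are polynomials in the already-updated variables $x_1,\ldots,x_{i-1}$ (i.e. their values in the current iteration) whose coefficients are constants or random variables drawn independently (e.g. uniformly from a fixed interval, such as \texttt{rand}$(a,b)$) with known constant moments, independent of the program state. The probabilistic choices in each iteration are independent. For $n\ge 0$, $x_i(n)$ denotes the random variable giving the value of $x_i$ after $n$ loop iterations, and for a monomial $M=\prod x_i^{\alpha_i}$, $M(n)=\prod x_i(n)^{\alpha_i}$. An E-variable is an expression $E[M(n)]$,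 the expected value of a monomial in the program variables at iteration $n$. A C-finite recurrence is a linear recurrence with constant coefficients. *)

(* Defs.v *)
From HB Require Import structures.
From mathcomp Require Import all_boot all_order all_algebra.
From mathcomp Require Import all_classical all_reals all_analysis.
Set Implicit Arguments. Unset Strict Implicit. Unset Printing Implicit Defensive.
Import Order.TTheory GRing.Theory Num.Theory.
Local Open Scope classical_set_scope.
Local Open Scope ring_scope.

Definition monomial (m : nat) := {ffun 'I_m -> nat}.

Definition mono_eval {R : pzRingType} (m : nat) (alpha : monomial m) (s : 'I_m -> R) : R :=
  \prod_(j < m) s j ^+ alpha j.

(* Syntax of a Prob-solvable loop with variables x_0 .. x_{m-1} (updated in this order):
     x_i := a_i x_i + P_i(x_0..x_{i-1})  with probability p_i
     x_i := b_i x_i + Q_i(x_0..x_{i-1})  with probability 1 - p_i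
   P_i (branch [true]) and Q_i (branch [false]) are given by a list of monomials
   [terms i br]; the coefficient of the t-th monomial is a random variable
   (see [loop_model]).  Constants are the degenerate case. *)
Record prob_solvable (R : realType) (m : nat) := ProbSolvable {
  ps_init : 'I_m -> R;
  ps_a : 'I_m -> R;
  ps_b : 'I_m -> R;
  ps_p : 'I_m -> R;
  ps_terms : 'I_m -> bool -> seq (monomial m);
  ps_p_ge0 : forall i, 0 <= ps_p i;
  ps_p_le1 : forall i, ps_p i <= 1;
  (* P_i, Q_i only involve the already-updated variables x_j, j < i *)
  ps_triangular : forall i br (alpha : monomial m), alpha \in ps_terms i br ->
      forall j : 'I_m, (i <= j)%N -> alpha j = 0%N
}.

(* Index of the random quantities drawn in the loop:
   (k, i, None)          : the branch selector of variable i in iteration k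
                           (value 1 = first branch, value 0 = second branch);
   (k, i, Some (br, t))  : the coefficient of the t-th monomial of P_i (br = true)
                           or Q_i (br = false) in iteration k. *)
Definition rindex (m : nat) := (nat * 'I_m * option (bool * nat))%type.

Definition mutually_independent {d} {T : measurableType d} {R : realType}
    (P : probability T R) (I : eqType) (X : I -> T -> R) : Prop :=
  forall (J : seq I) (B : I -> set R), uniq J ->
    (forall j, j \in J -> measurable (B j)) ->
    P (\bigcap_(j in [set j | j \in J]) (X j @^-1` B j)) =
    (\prod_(j <- J) P (X j @^-1` B j))%E.

Section Semantics.
Context {d} {T : measurableType d} {R : realType} {m : nat}.
Variables (L : prob_solvable R m) (Z : rindex m -> T -> R).

Definition branch_poly (k : nat) (w : T) (i : 'I_m) (br : bool) (s : 'I_m -> R) : R :=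
  \sum_(t < size (ps_terms L i br))
     Z (k, i, Some (br, val t)) w * mono_eval (nth [ffun => 0%N] (ps_terms L i br) t) s.

(* new value assigned to x_i in iteration k, given the current state s
   (in which x_0..x_{i-1} already hold their updated values) *)
Definition assign (k : nat) (w : T) (s : 'I_m -> R) (i : 'I_m) : R :=
  if Z (k, i, None) w == 1 then ps_a L i * s i + branch_poly k w i true s
  else ps_b L i * s i + branch_poly k w i false s.

Definition upd (s : 'I_m -> R) (i : 'I_m) (v : R) : 'I_m -> R :=
  fun j => if j == i then v else s j.

Definition body (k : nat) (w : T) (s : 'I_m -> R) : 'I_m -> R :=
  foldl (fun s i => upd s i (assign k w s i)) s (enum 'I_m).

Fixpoint state (n : nat) (w : T) : 'I_m -> R :=
  match n with
  | 0 => ps_init L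
  | n'.+1 => body n' w (state n' w)
  end.

Definition mono_rv (M : monomial m) (n : nat) : T -> R :=
  fun w => mono_eval M (state n w).

End Semantics.

Definition loop_model {d} {T : measurableType d} {R : realType} {m : nat}
    (L : prob_solvable R m) (P : probability T R) (Z : rindex m -> {RV P >-> R}) : Prop :=
  [/\ mutually_independent P (fun j => (Z j : T -> R)),
      (forall k i, P ((Z (k, i, None) : T -> R) @^-1` [set 1]) = (ps_p L i)%:E),
      (forall k i, P ((Z (k, i, None) : T -> R) @^-1` [set 0]) = (1 - ps_p L i)%:E),
      (forall k i br (t : nat) (r : nat), (t < size (ps_terms L i br))%N ->
         P.-integrable setT (fun w => ((Z (k, i, Some (br, t)) w) ^+ r)%:E))
    & (forall k k' i br (t : nat) (r : nat), (t < size (ps_terms L i br))%N ->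
         ('E_P[fun w => ((Z (k, i, Some (br, t)) w) ^+ r)%R])%E =
         ('E_P[fun w => ((Z (k', i, Some (br, t)) w) ^+ r)%R])%E)].
Arguments loop_model {d T R m} L P Z.

(* Main.v *)
Require Import Defs.
From HB Require Import structures.
From mathcomp Require Import all_boot all_order all_algebra.
From mathcomp Require Import all_classical all_reals all_analysis.
From mathcomp Require Import measurable_realfun.
From mathcomp Require Import ring lra.
Set Implicit Arguments. Unset Strict Implicit. Unset Printing Implicit Defensive.
Import Order.TTheory GRing.Theory Num.Theory.
Local Open Scope classical_set_scope.
Local Open Scope ring_scope.

Import HBNNSimple.
Section step.
Context d (T : measurableType d) (R : realType) (P : probability T R).
Local Open Scope ereal_scope.
Variables (X : T -> R) (mX : measurable_fun setT X).

Lemma simple_dec (h : {nnsfun R >-> R}) (Y : T -> \bar R) :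
  measurable_fun setT Y -> (forall w, 0 <= Y w) ->
  let s := finmap.enum_fset (fset_set (range h)) in
  \int[P]_w ((h (X w))%:E * Y w) =
  \sum_(i < size s) (s`_i)%:E *
     \int[P]_w ((\1_(X @^-1` (h @^-1` [set s`_i])) w)%:E * Y w).
Proof.
move=> mY Y0 s.
have s0 i : (0 <= s`_i)%R.
  have [ilt|ige] := ltnP i (size s); last by rewrite nth_default.
  have := mem_nth 0%R ilt; rewrite /s.
  rewrite (in_fset_set (fimfunP h)) inE => -[x _ <-]; exact: fun_ge0.
have mI i : measurable (X @^-1` (h @^-1` [set s`_i])).
  by rewrite -[X in measurable X]setTI; apply: mX => //; exact: measurable_funPTI.
under eq_integral => w _.
  rewrite (fimfunEord h (X w)) -sumEFin ge0_sume_distrl; last first.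
    by move=> i _; rewrite lee_fin mulr_ge0.
  over.
rewrite ge0_integral_sum //; last first.
- by move=> i w _; rewrite mule_ge0 // lee_fin mulr_ge0.
- move=> i; apply: emeasurable_funM => //; apply/measurable_EFinP.
  apply: measurable_funM => //.
  exact: (measurable_indic (mI i)).
apply: eq_bigr => i _.
under eq_integral do rewrite EFinM -muleA.
rewrite ge0_integralZl //.
- apply: emeasurable_funM => //; apply/measurable_EFinP.
  exact: (measurable_indic (mI i)).
- by move=> w _; rewrite mule_ge0.
- by rewrite lee_fin.
Qed.

Lemma step_ind (Y : T -> R) : measurable_fun setT Y -> (forall w, 0 <= Y w)%R ->
  \int[P]_w (Y w)%:E \is a fin_num ->
  (forall B, measurable B -> \int[P]_w ((\1_(X @^-1` B) w)%:E * (Y w)%:E) =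
       P (X @^-1` B) * \int[P]_w (Y w)%:E) ->
  forall f : R -> R, measurable_fun setT f -> (forall x, 0 <= f x)%R ->
  \int[P]_w ((f (X w))%:E * (Y w)%:E) = \int[P]_w (f (X w))%:E * \int[P]_w (Y w)%:E.
Proof.
move=> mY Y0 Yfin HY f mf f0.
have mEf : measurable_fun setT (EFin \o f) by by apply/measurable_EFinP.
set h := nnsfun_approx measurableT mEf.
have mhX n : measurable_fun setT (fun w => (h n (X w))%:E).
  by apply/measurable_EFinP; apply: measurableT_comp => //; exact: measurable_funP.
have hcvg x : (fun n => (h n x)%:E) @ \oo --> (f x)%:E.
  have := @cvg_nnsfun_approx _ _ _ _ measurableT _ mEf (fun y _ => (f0 y : (0 <= (EFin \o f) y)%E)) x I; exact.
have hnd x : {homo (fun n => h n x) : n m / (n <= m)%N >-> (n <= m)%R}.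
  by move=> a b ab; exact/lefP/nd_nnsfun_approx.
have hge0 n x : (0 <= h n x)%R by exact: fun_ge0.
set c := \int[P]_w (Y w)%:E.
have c0 : 0 <= c by apply: integral_ge0 => w _; rewrite lee_fin.
have simp n : \int[P]_w ((h n (X w))%:E * (Y w)%:E) =
    \int[P]_w (h n (X w))%:E * c.
  rewrite simple_dec //; last by apply/measurable_EFinP.
  have -> : \int[P]_w (h n (X w))%:E = \int[P]_w ((h n (X w))%:E * (cst 1%R w)%:E).
    by apply: eq_integral => w _; rewrite mule1.
  rewrite simple_dec //; last by apply/measurable_EFinP; exact: measurable_cst.
  rewrite ge0_sume_distrl; last first.
    move=> i _; apply: mule_ge0; last first.
      by apply: integral_ge0 => w _; rewrite mule_ge0 // lee_fin.
    set s := finmap.enum_fset _.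
    have [ilt|ige] := ltnP i (size s); last by rewrite nth_default.
    have := mem_nth 0%R ilt; rewrite /s.
    by rewrite (in_fset_set (fimfunP (h n))) inE => -[x _ <-]; rewrite lee_fin.
  apply: eq_bigr => i _; rewrite -muleA; congr (_ * _).
  have mB : measurable (h n @^-1` [set (finmap.enum_fset (fset_set (range (h n))))`_i]).
    exact: measurable_funPTI.
  rewrite HY //; congr (_ * _).
  under eq_integral do rewrite /= mule1.
  by rewrite integral_indic // ?setIT //; rewrite -[X in measurable X]setTI; exact: mX.
have -> : \int[P]_w ((f (X w))%:E * (Y w)%:E) =
    limn (fun n => \int[P]_w ((h n (X w))%:E * (Y w)%:E)).
  rewrite -monotone_convergence //.
  - apply: eq_integral => w _; apply/esym/cvg_lim => //.
    by apply: cvgeZr => //; exact: hcvg.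
  - by move=> n; apply: emeasurable_funM => //; by apply/measurable_EFinP.
  - by move=> n w _; rewrite mule_ge0 // lee_fin.
  - by move=> w _ a b ab; rewrite lee_wpmul2r ?lee_fin //; exact: hnd.
have -> : \int[P]_w (f (X w))%:E = limn (fun n => \int[P]_w (h n (X w))%:E).
  rewrite -monotone_convergence //.
  - apply: eq_integral => w _; apply/esym/cvg_lim => //; exact: hcvg.
  - by move=> n w _; rewrite lee_fin.
  - by move=> w _ a b ab; rewrite lee_fin; exact: hnd.
under eq_fun do rewrite simp.
have ndB : nondecreasing_seq (fun n => \int[P]_w (h n (X w))%:E).
  move=> a b ab; apply: ge0_le_integral => //.
  all: try by move=> w _; rewrite lee_fin.
  by move=> w _; rewrite lee_fin; exact: hnd.
apply: cvg_lim => //; apply: cvgeZr => //.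
exact: ereal_nondecreasing_is_cvgn.
Qed.
End step.

Section indep.
Context d (T : measurableType d) (R : realType) (P : probability T R).
Context (I : eqType) (Z : I -> T -> R).
Hypothesis mZ : forall i, measurable_fun setT (Z i).
Hypothesis indep : forall (J : seq I) (B : I -> set R), uniq J ->
    (forall j, j \in J -> measurable (B j)) ->
    P (\bigcap_(j in [set j | j \in J]) (Z j @^-1` B j)) =
    (\prod_(j <- J) P (Z j @^-1` B j))%E.

Definition capK (K : seq I) (B : I -> set R) :=
  \bigcap_(k in [set k | k \in K]) (Z k @^-1` B k).

Lemma capK_nil B : capK [::] B = setT.
Proof. by apply/seteqP; split => w //= _ k /=; rewrite in_nil. Qed.

Lemma capK_cons j K B : capK (j :: K) B = Z j @^-1` B j `&` capK K B.
Proof.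
apply/seteqP; split => w /=.
  move=> H; split; first by apply: H; rewrite /= mem_head.
  by move=> k /= kK; apply: H; rewrite /= in_cons kK orbT.
move=> [H1 H2] k /=; rewrite in_cons => /orP[/eqP -> //|kK].
exact: H2.
Qed.

Lemma capK_eq K B B' : (forall k, k \in K -> B k = B' k) -> capK K B = capK K B'.
Proof.
move=> H; apply/seteqP; split => w /= H' k /= kK.
  by rewrite -H //; exact: H'.
by rewrite H //; exact: H'.
Qed.

Lemma capK_meas K B : (forall k, measurable (B k)) -> measurable (capK K B).
Proof.
move=> mB; elim: K => [|k K IH]; first by rewrite capK_nil.
rewrite capK_cons; apply: measurableI => //.
by rewrite -[X in measurable X]setTI; exact: mZ.
Qed.

Local Open Scope ereal_scope.

Lemma P1 (J : seq I) (f : I -> R -> R) :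
  uniq J -> (forall j, measurable_fun setT (f j)) -> (forall j x, (0 <= f j x)%R) ->
  (forall j, j \in J -> \int[P]_w (f j (Z j w))%:E \is a fin_num) ->
  forall K B, uniq K -> (forall k, k \in K -> k \notin J) ->
  (forall k, measurable (B k)) ->
  \int[P]_w ((\prod_(j <- J) f j (Z j w)) * \1_(capK K B) w)%:E =
  ((\prod_(j <- J) fine (\int[P]_w (f j (Z j w))%:E)) * fine (P (capK K B)))%:E.
Proof.
move=> + mf f0; elim: J => [|j J IH] uJ ffin K B uK KJ mB.
  under eq_integral do rewrite big_nil mul1r.
  rewrite integral_indic // ?setIT ?big_nil ?mul1r ?fineK //; last exact: capK_meas.
  by rewrite fin_num_measure //; exact: capK_meas.
move: uJ => /= /andP[jJ uJ].
have ffin' : forall k, k \in J -> \int[P]_w (f k (Z k w))%:E \is a fin_num.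
  by move=> k kJ; apply: ffin; rewrite in_cons kJ orbT.
set Y := fun w => ((\prod_(k <- J) f k (Z k w)) * \1_(capK K B) w)%R.
have mY : measurable_fun setT Y.
  apply: measurable_funM; first by apply: measurable_prod => k _; exact: measurableT_comp.
  exact/measurable_indic/capK_meas.
have Y0 w : (0 <= Y w)%R.
  by apply: mulr_ge0; [apply: prodr_ge0 => k _ | rewrite /indic]; rewrite ?f0.
have KJ' : forall k, k \in K -> k \notin J.
  by move=> k /KJ; rewrite in_cons negb_or => /andP[].
have IHK := IH uJ ffin' K B uK KJ' mB.
under eq_integral do rewrite big_cons -mulrA EFinM.
rewrite (step_ind (mZ j) mY Y0) //; last first.
- move=> B0 mB0.
  set B' := fun k => if k == j then B0 else B k.
  have mB' k : measurable (B' k) by rewrite /B'; case: ifP.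
  have jK : j \notin K by apply/negP => /KJ; rewrite mem_head.
  have uK' : uniq (j :: K) by rewrite /= jK uK.
  have KJ'' : forall k, k \in j :: K -> k \notin J.
    by move=> k; rewrite in_cons => /orP[/eqP -> //|/KJ']. 
  have := IH uJ ffin' (j :: K) B' uK' KJ'' mB'.
  have capE : capK (j :: K) B' = Z j @^-1` B0 `&` capK K B.
    rewrite capK_cons /B' eqxx; congr (_ `&` _); apply: capK_eq => k kK.
    by case: eqP => // kj; move: jK; rewrite -kj kK.
  rewrite capE => H.
  have mZj : measurable (Z j @^-1` B0) by rewrite -[X in measurable X]setTI; exact: mZ.
  rewrite IHK -[P (Z j @^-1` B0)]fineK ?fin_num_measure //.
  have -> : \int[P]_w ((\1_(Z j @^-1` B0) w)%:E * (Y w)%:E) =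
     \int[P]_w ((\prod_(j0 <- J) f j0 (Z j0 w)) * \1_(Z j @^-1` B0 `&` capK K B) w)%:E.
    apply: eq_integral => w _; rewrite -EFinM /Y indicI /=; congr (_%:E).
    by rewrite mulrCA.
  rewrite H; congr (_%:E).
  have : P (Z j @^-1` B0 `&` capK K B) = P (Z j @^-1` B0) * P (capK K B).
    rewrite -capE /capK (indep uK' (fun k _ => mB' k)).
    rewrite big_cons /B' eqxx (indep uK (fun k _ => mB k)).
    congr (_ * _); apply: eq_big_seq => k kK; case: eqP => // kj.
    by move: jK; rewrite -kj kK.
  move=> ->; rewrite fineM ?fin_num_measure //; last exact: capK_meas.
  by rewrite mulrCA mulrA.
- by rewrite IHK.
rewrite IHK -[\int[P]_w (f j (Z j w))%:E]fineK; last by apply: ffin; exact: mem_head.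
by rewrite -EFinM big_cons mulrA.
Qed.

Lemma P1c (L : seq I) (h : I -> R -> R) :
  uniq L -> (forall j, measurable_fun setT (h j)) -> (forall j x, (0 <= h j x)%R) ->
  (forall j, j \in L -> \int[P]_w (h j (Z j w))%:E \is a fin_num) ->
  \int[P]_w (\prod_(j <- L) h j (Z j w))%:E =
  (\prod_(j <- L) fine (\int[P]_w (h j (Z j w))%:E))%:E.
Proof.
move=> uL mh h0 hfin.
have := @P1 L h uL mh h0 hfin [::] (fun _ => setT) erefl (fun k (H : k \in [::]) => ltac:(by [])) (fun _ => measurableT).
rewrite capK_nil probability_setT /= mulr1 => <-.
by apply: eq_integral => w _; rewrite indicT /= mulr1.
Qed.

Lemma prod_integrable (L : seq I) (h : I -> R -> R) :
  uniq L -> (forall j, measurable_fun setT (h j)) ->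
  (forall j, j \in L -> P.-integrable setT (fun w => (h j (Z j w))%:E)) ->
  P.-integrable setT (fun w => (\prod_(j <- L) h j (Z j w))%:E).
Proof.
move=> uL mh hint; apply/integrableP; split.
  by apply/measurable_EFinP; apply: measurable_prod => j _; exact: measurableT_comp.
under eq_integral do rewrite abse_EFin normr_prod.
rewrite (@P1c L (fun j x => `|h j x|)%R) //.
- exact: ltry.
- by move=> j; apply: measurableT_comp => //; exact: normr_measurable.
- move=> j jL; have /integrableP[mj hj] := hint j jL.
  rewrite ge0_fin_numE; last by apply: integral_ge0 => w _; rewrite lee_fin.
  by under eq_integral do rewrite -abse_EFin.
Qed.

Lemma JK_integrable (J K : seq I) (g f : I -> R -> R) :
  uniq J -> uniq K -> (forall k, k \in K -> k \notin J) ->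
  (forall j, measurable_fun setT (g j)) -> (forall j, measurable_fun setT (f j)) ->
  (forall j, j \in J -> P.-integrable setT (fun w => (g j (Z j w))%:E)) ->
  (forall k, k \in K -> P.-integrable setT (fun w => (f k (Z k w))%:E)) ->
  P.-integrable setT (fun w => ((\prod_(j <- J) g j (Z j w)) * \prod_(k <- K) f k (Z k w))%:E).
Proof.
move=> uJ uK KJ mg mf ig if_.
set h := fun k => if k \in J then g k else f k.
have -> : (fun w => ((\prod_(j <- J) g j (Z j w)) * \prod_(k <- K) f k (Z k w))%:E) =
    (fun w => (\prod_(j <- J ++ K) h j (Z j w))%:E).
  apply: funext => w; rewrite big_cat /=; congr ((_ * _)%:E).
    by apply: eq_big_seq => k kJ; rewrite /h kJ.
  by apply: eq_big_seq => k kK; rewrite /h (negbTE (KJ k kK)).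
apply: prod_integrable.
- rewrite cat_uniq uJ uK andbT /=; apply/hasPn => k kK; exact: KJ.
- by move=> k; rewrite /h; case: ifP.
- move=> k; rewrite mem_cat /h; case: ifP => [kJ _|kJ /= kK]; first exact: ig.
  exact: if_.
Qed.

Lemma P2 (J : seq I) (g : I -> R -> R) : uniq J -> (forall j, measurable_fun setT (g j)) ->
  (forall j, j \in J -> P.-integrable setT (fun w => (g j (Z j w))%:E)) ->
  forall K (f : I -> R -> R), uniq K -> (forall k, k \in K -> k \notin J) ->
  (forall j, measurable_fun setT (f j)) -> (forall j x, (0 <= f j x)%R) ->
  (forall k, k \in K -> P.-integrable setT (fun w => (f k (Z k w))%:E)) ->
  \int[P]_w ((\prod_(j <- J) g j (Z j w)) * \prod_(k <- K) f k (Z k w))%:E =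
  ((\prod_(j <- J) fine (\int[P]_w (g j (Z j w))%:E)) *
    \prod_(k <- K) fine (\int[P]_w (f k (Z k w))%:E))%:E.
Proof.
move=> + mg; elim: J => [|j J IH] uJ ig K f uK KJ mf f0 if_.
  under eq_integral do rewrite big_nil mul1r.
  rewrite big_nil mul1r P1c // => k kK; exact: integrable_fin_num (if_ k kK).
move: uJ => /= /andP[jJ uJ].
have ig' : forall k, k \in J -> P.-integrable setT (fun w => (g k (Z k w))%:E).
  by move=> k kJ; apply: ig; rewrite in_cons kJ orbT.
have igj := ig j (mem_head _ _).
set gp := fun x => Num.max (g j x) 0%R.
set gm := fun x => Num.max (- g j x)%R 0%R.
have gdec x : g j x = (gp x - gm x)%R.
  rewrite /gp /gm; have [h|h] := leP 0%R (g j x).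
    by rewrite (max_r _) ?subr0 // oppr_le0.
  by rewrite (max_l _) ?opprK ?add0r // oppr_ge0 ltW.
have mgp : measurable_fun setT gp by apply: measurable_maxr => //; exact: measurable_cst.
have mgm : measurable_fun setT gm.
  by apply: measurable_maxr; [exact: measurable_funN|exact: measurable_cst].
have gp0 x : (0 <= gp x)%R by rewrite /gp le_max lexx orbT.
have gm0 x : (0 <= gm x)%R by rewrite /gm le_max lexx orbT.
have igpm (q : R -> R) : measurable_fun setT q -> (forall x, `|q x| <= `|g j x|)%R ->
    P.-integrable setT (fun w => (q (Z j w))%:E).
  move=> mq qle; apply: le_integrable igj => //.
    by apply/measurable_EFinP; exact: measurableT_comp.
  by move=> w _; rewrite !abse_EFin lee_fin qle.
have igp : P.-integrable setT (fun w => (gp (Z j w))%:E).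
  apply: igpm => // x; rewrite /gp; have [h|h] := leP 0%R (g j x) => //.
  by rewrite normr0.
have igm : P.-integrable setT (fun w => (gm (Z j w))%:E).
  apply: igpm => // x; rewrite /gm; have [h|h] := leP 0%R (g j x).
    by rewrite (max_r _) ?normr0 // oppr_le0.
  by rewrite (max_l _) ?normrN // oppr_ge0 ltW.
have jK : j \notin K by apply/negP => /KJ; rewrite mem_head.
have uK' : uniq (j :: K) by rewrite /= jK uK.
have KJ' : forall k, k \in j :: K -> k \notin J.
  move=> k; rewrite in_cons => /orP[/eqP -> //|/KJ].
  by rewrite in_cons negb_or => /andP[].
set F := fun q : R -> R => fun k => if k == j then q else f k.
have mF q : measurable_fun setT q -> forall k, measurable_fun setT (F q k).
  by move=> mq k; rewrite /F; case: ifP.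
have F0 q : (forall x, 0 <= q x)%R -> forall k x, (0 <= F q k x)%R.
  by move=> q0 k x; rewrite /F; case: ifP.
have iF q : P.-integrable setT (fun w => (q (Z j w))%:E) ->
    forall k, k \in j :: K -> P.-integrable setT (fun w => (F q k (Z k w))%:E).
  move=> iq k; rewrite in_cons /F; case: eqP => [-> //|_ /= kK]; exact: if_.
have prodF q w : (\prod_(k <- j :: K) F q k (Z k w) = q (Z j w) * \prod_(k <- K) f k (Z k w))%R.
  rewrite big_cons /F eqxx; congr (_ * _)%R; apply: eq_big_seq => k kK.
  by case: eqP => // kj; move: jK; rewrite -kj kK.
have prodFi q : (\prod_(k <- j :: K) fine (\int[P]_w (F q k (Z k w))%:E) =
     fine (\int[P]_w (q (Z j w))%:E) * \prod_(k <- K) fine (\int[P]_w (f k (Z k w))%:E))%R.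
  rewrite big_cons /F eqxx; congr (_ * _)%R; apply: eq_big_seq => k kK.
  by case: eqP => // kj; move: jK; rewrite -kj kK.
have IHp := IH uJ ig' (j :: K) (F gp) uK' KJ' (mF _ mgp) (F0 _ gp0) (iF _ igp).
have IHm := IH uJ ig' (j :: K) (F gm) uK' KJ' (mF _ mgm) (F0 _ gm0) (iF _ igm).
have intp := JK_integrable uJ uK' KJ' mg (mF _ mgp) ig' (iF _ igp).
have intm := JK_integrable uJ uK' KJ' mg (mF _ mgm) ig' (iF _ igm).
have -> : (fun w => ((\prod_(j0 <- j :: J) g j0 (Z j0 w)) * \prod_(k <- K) f k (Z k w))%:E) =
   (fun w => ((\prod_(j0 <- J) g j0 (Z j0 w)) * \prod_(k <- j :: K) F gp k (Z k w))%:E -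
             ((\prod_(j0 <- J) g j0 (Z j0 w)) * \prod_(k <- j :: K) F gm k (Z k w))%:E).
  apply: funext => w; rewrite !prodF big_cons gdec -EFinB; congr (_%:E).
  by ring.
rewrite integralB_EFin //; try exact: intp; try exact: intm.
rewrite IHp IHm -EFinB !prodFi.
rewrite big_cons.
have -> : \int[P]_w (g j (Z j w))%:E = \int[P]_w (gp (Z j w))%:E - \int[P]_w (gm (Z j w))%:E.
  rewrite -integralB_EFin //; try exact: igp; try exact: igm.
  by apply: eq_integral => w _; rewrite gdec EFinB.
have fp := integrable_fin_num measurableT igp.
have fm := integrable_fin_num measurableT igm.
rewrite (fineB fp fm); congr (_%:E); ring.
Qed.
End indep.

Section Alg.
Context {d} {T : measurableType d} {R : realType} {m : nat}.
Variables (L : prob_solvable R m) (Zf : rindex m -> T -> R).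

Definition LQ := ('I_m * option (bool * nat))%type.

Definition opts (i : 'I_m) : seq (option (bool * nat)) :=
  None :: [seq Some (true, t) | t <- iota 0 (size (ps_terms L i true))] ++
          [seq Some (false, t) | t <- iota 0 (size (ps_terms L i false))].

Definition Dloc : seq LQ :=
  undup (flatten [seq [seq (i, o) | o <- opts i] | i <- enum 'I_m]).

Lemma Dloc_uniq : uniq Dloc. Proof. exact: undup_uniq. Qed.

Lemma in_Dloc (q : LQ) : (q \in Dloc) = (q.2 \in opts q.1).
Proof.
rewrite mem_undup; apply/flattenP/idP.
  by move=> [s] /mapP[i _ ->] /mapP[ox oxi ->].
move=> H; exists [seq (q.1, o) | o <- opts q.1].
  by apply/mapP; exists q.1 => //; rewrite mem_enum.
by apply/mapP; exists q.2 => //; case: q H.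
Qed.

Lemma Dloc_None i : (i, None) \in Dloc.
Proof. by rewrite in_Dloc /= in_cons eqxx. Qed.

Lemma Dloc_SomeP i br t : ((i, Some (br, t)) \in Dloc) = (t < size (ps_terms L i br))%N.
Proof.
rewrite in_Dloc /= in_cons /= mem_cat; apply/orP/idP.
  by case=> /mapP[t' Ht' [-> ->]]; move: Ht'; rewrite mem_iota add0n => /andP[].
by case: br => lt; [left|right]; apply/mapP; exists t => //; rewrite mem_iota add0n lt.
Qed.

Definition deg (b : monomial m) : nat := (\sum_(j < m) b j)%N.
Definition Kw : nat := (1 + \sum_(i < m)
   (\sum_(b <- ps_terms L i true) deg b + \sum_(b <- ps_terms L i false) deg b))%N.
Definition wt (N : monomial m) : nat := (\sum_(j < m) N j * Kw ^ j)%N.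

Lemma Kw_gt0 : (0 < Kw)%N. Proof. by rewrite /Kw. Qed.

Lemma deg_lt i br b : b \in ps_terms L i br -> (deg b < Kw)%N.
Proof.
move=> bin; rewrite /Kw add1n ltnS.
apply: (@leq_trans (\sum_(b <- ps_terms L i true) deg b + \sum_(b <- ps_terms L i false) deg b)%N).
  case: br bin => bin.
    by apply: leq_trans (leq_addr _ _); rewrite (big_rem b) //= leq_addr.
  by apply: leq_trans (leq_addl _ _); rewrite (big_rem b) //= leq_addr.
by rewrite (bigD1 i) //= leq_addr.
Qed.

Lemma wt_terms i br b : b \in ps_terms L i br -> (wt b <= Kw ^ i)%N.
Proof.
move=> bin; have bz := ps_triangular bin.
case: (posnP i) => [i0|ipos].
  rewrite /wt big1 // => j _; rewrite bz ?mul0n //; by rewrite i0.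
rewrite -(prednK ipos) expnS.
apply: (@leq_trans (deg b * Kw ^ i.-1)%N); last first.
  by rewrite leq_mul2r (ltnW (deg_lt bin)) orbT.
rewrite /deg big_distrl /=; apply: leq_sum => j _.
case: (ltnP j i) => ji; last by rewrite bz.
rewrite leq_mul2l leq_pexp2l ?Kw_gt0 ?orbT //.
by rewrite -ltnS prednK.
Qed.

Definition atomL (k : nat) (q : LQ) (w : T) : R :=
  match q.2 with
  | Some bt => Zf (k, q.1, Some bt) w
  | None => ((Zf (k, q.1, None) w == 1)%:R)
  end.

Definition evalL k (e : LQ -> nat) w : R := \prod_(q <- Dloc) atomL k q w ^+ e q.

Definition LT := (R * (LQ -> nat) * monomial m)%type.

Definition evalLT k w (s : 'I_m -> R) (x : LT) : R := x.1.1 * evalL k x.1.2 w * mono_eval x.2 s.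

Definition LRep (b : nat) (F : nat -> T -> ('I_m -> R) -> R) :=
  exists q : seq LT, all (fun x : LT => (wt x.2 <= b)%N) q /\
     forall k w s, F k w s = \sum_(x <- q) evalLT k w s x.

Definition m0 : monomial m := [ffun => 0%N].
Definition madd (N N' : monomial m) : monomial m := [ffun j => (N j + N' j)%N].
Definition munit (j : 'I_m) : monomial m := [ffun j' => nat_of_bool (j' == j)].

Lemma mono_eval0 (s : 'I_m -> R) : mono_eval m0 s = 1.
Proof. by rewrite /mono_eval big1 // => j _; rewrite ffunE expr0. Qed.

Lemma mono_evalD N N' (s : 'I_m -> R) : mono_eval (madd N N') s = mono_eval N s * mono_eval N' s.
Proof. by rewrite /mono_eval -big_split; apply: eq_bigr => j _; rewrite ffunE exprD. Qed.

Lemma mono_evalU j (s : 'I_m -> R) : mono_eval (munit j) s = s j.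
Proof.
rewrite /mono_eval (bigD1 j) //= ffunE eqxx expr1 big1 ?mulr1 // => j' /negbTE jj.
by rewrite ffunE jj expr0.
Qed.

Lemma wt0 : wt m0 = 0%N. Proof. by rewrite /wt big1 // => j _; rewrite ffunE. Qed.
Lemma wtD N N' : wt (madd N N') = (wt N + wt N')%N.
Proof. by rewrite /wt -big_split; apply: eq_bigr => j _; rewrite ffunE mulnDl. Qed.
Lemma wtU j : wt (munit j) = (Kw ^ j)%N.
Proof.
rewrite /wt (bigD1 j) //= ffunE eqxx mul1n big1 ?addn0 // => j' /negbTE jj.
by rewrite ffunE jj.
Qed.

Lemma evalL0 k w : evalL k (fun _ => 0%N) w = 1.
Proof. by rewrite /evalL big1 // => q _; rewrite expr0. Qed.

Lemma evalLD k e e' w : evalL k (fun q => e q + e' q)%N w = evalL k e w * evalL k e' w.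
Proof. by rewrite /evalL -big_split; apply: eq_bigr => q _; rewrite exprD. Qed.

Lemma evalL1 k q w : q \in Dloc -> evalL k (fun q' => nat_of_bool (q' == q)) w = atomL k q w.
Proof.
move=> qD; rewrite /evalL (big_rem q) //= eqxx expr1 big_seq big1 ?mulr1 // => q' q'in.
have -> : (q' == q) = false.
  by apply/negbTE; apply: contraTneq q'in => ->; rewrite mem_rem_uniqF // Dloc_uniq.
by rewrite expr0.
Qed.

Lemma LRep_ext b F G : (forall k w s, F k w s = G k w s) -> LRep b F -> LRep b G.
Proof. by move=> FG [q [qa qe]]; exists q; split => // k w s; rewrite -FG. Qed.

Lemma LRep_le b b' F : (b <= b')%N -> LRep b F -> LRep b' F.
Proof.
move=> bb [q [qa qe]]; exists q; split => //.
by apply/allP => x /(allP qa) /leq_trans; apply.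
Qed.

Lemma LRep_const c : LRep 0 (fun _ _ _ => c).
Proof.
exists [:: (c, fun _ => 0%N, m0)]; split; first by rewrite /= wt0.
by move=> k w s; rewrite big_seq1 /evalLT /= evalL0 mono_eval0 !mulr1.
Qed.

Lemma LRep_var (j : 'I_m) : LRep (Kw ^ j) (fun _ _ s => s j).
Proof.
exists [:: (1, fun _ => 0%N, munit j)]; split; first by rewrite /= wtU leqnn.
by move=> k w s; rewrite big_seq1 /evalLT /= evalL0 mono_evalU !mul1r.
Qed.

Lemma LRep_atom q : q \in Dloc -> LRep 0 (fun k w _ => atomL k q w).
Proof.
move=> qD; exists [:: (1, fun q' => nat_of_bool (q' == q), m0)]; split; first by rewrite /= wt0.
by move=> k w s; rewrite big_seq1 /evalLT /= evalL1 // mono_eval0 mulr1 mul1r.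
Qed.

Lemma LRep_add b F G : LRep b F -> LRep b G -> LRep b (fun k w s => F k w s + G k w s).
Proof.
move=> [q1 [a1 e1]] [q2 [a2 e2]]; exists (q1 ++ q2); split; first by rewrite all_cat a1 a2.
by move=> k w s; rewrite big_cat /= e1 e2.
Qed.

Definition mulLT (x y : LT) : LT :=
  (x.1.1 * y.1.1, fun q => (x.1.2 q + y.1.2 q)%N, madd x.2 y.2).

Lemma evalLT_mul k w s x y : evalLT k w s (mulLT x y) = evalLT k w s x * evalLT k w s y.
Proof.
rewrite /evalLT /mulLT /= evalLD mono_evalD.
by ring.
Qed.

Lemma LRep_mul b1 b2 F G : LRep b1 F -> LRep b2 G ->
  LRep (b1 + b2) (fun k w s => F k w s * G k w s).
Proof.
move=> [q1 [a1 e1]] [q2 [a2 e2]]; exists [seq mulLT x y | x <- q1, y <- q2]; split.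
  apply/allP => z /allpairsP[[x y] [/= xin yin ->]] /=.
  by rewrite wtD leq_add //; [exact: (allP a1) | exact: (allP a2)].
move=> k w s; rewrite e1 e2 big_allpairs_dep /= mulr_suml; apply: eq_bigr => x _.
by rewrite mulr_sumr; apply: eq_bigr => y _; rewrite evalLT_mul.
Qed.

Lemma LRep_sum (I : Type) (r : seq I) b (F : I -> nat -> T -> ('I_m -> R) -> R) :
  (forall i, LRep b (F i)) -> LRep b (fun k w s => \sum_(i <- r) F i k w s).
Proof.
move=> HF; elim: r => [|i r IH].
  apply: (LRep_le (leq0n b)); apply: (LRep_ext _ (LRep_const 0)) => k w s.
  by rewrite big_nil.
by apply: LRep_ext (LRep_add (HF i) IH) => k w s; rewrite big_cons.
Qed.

Lemma LRep_prod (I : Type) (r : seq I) (b : I -> nat) (F : I -> nat -> T -> ('I_m -> R) -> R) :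
  (forall i, LRep (b i) (F i)) ->
  LRep (\sum_(i <- r) b i)%N (fun k w s => \prod_(i <- r) F i k w s).
Proof.
move=> HF; elim: r => [|i r IH].
  by rewrite big_nil; apply: (LRep_ext _ (LRep_const 1)) => k w s; rewrite big_nil.
by rewrite big_cons; apply: LRep_ext (LRep_mul (HF i) IH) => k w s; rewrite big_cons.
Qed.

Lemma LRep_pow b F n : LRep b F -> LRep (n * b) (fun k w s => F k w s ^+ n).
Proof.
move=> HF; elim: n => [|n IH].
  by apply: (LRep_ext _ (LRep_const 1)) => k w s; rewrite expr0.
by rewrite mulSn; apply: LRep_ext (LRep_mul HF IH) => k w s; rewrite exprS.
Qed.

Lemma LRep_mono (N : monomial m) (G : 'I_m -> nat -> T -> ('I_m -> R) -> R) :
  (forall j : 'I_m, LRep (Kw ^ j) (G j)) ->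
  LRep (wt N) (fun k w s => mono_eval N (fun j => G j k w s)).
Proof.
move=> HG; rewrite /wt /mono_eval.
apply: (@LRep_prod _ _ (fun j : 'I_m => (N j * Kw ^ j)%N)) => j.
exact: LRep_pow.
Qed.

Lemma ifE (b : bool) (x y : R) : (if b then x else y) = b%:R * x + (1 - b%:R) * y.
Proof. by case: b; rewrite /= ?mul1r ?subrr ?mul0r ?addr0 ?subr0 ?add0r ?mul1r. Qed.

Definition stepf k w (s : 'I_m -> R) (i : 'I_m) := upd s i (assign L Zf k w s i).

Lemma LRep_branch (i : 'I_m) (br : bool) (G : 'I_m -> nat -> T -> ('I_m -> R) -> R) :
  (forall j : 'I_m, LRep (Kw ^ j) (G j)) ->
  LRep (Kw ^ i) (fun k w s => branch_poly L Zf k w i br (fun j => G j k w s)).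
Proof.
move=> HG; rewrite /branch_poly; apply: LRep_sum => t.
have tD : (i, Some (br, val t)) \in Dloc by rewrite Dloc_SomeP ltn_ord.
apply: (LRep_le _ (LRep_mul (LRep_atom tD) (LRep_mono (nth [ffun => 0%N] (ps_terms L i br) t) HG))).
by rewrite add0n; apply: (wt_terms (br := br)); rewrite mem_nth.
Qed.

Lemma LRep_assign (i : 'I_m) (G : 'I_m -> nat -> T -> ('I_m -> R) -> R) :
  (forall j : 'I_m, LRep (Kw ^ j) (G j)) ->
  LRep (Kw ^ i) (fun k w s => assign L Zf k w (fun j => G j k w s) i).
Proof.
move=> HG; rewrite /assign.
have hD := LRep_atom (Dloc_None i).
have A br (c : 'I_m -> R) : LRep (Kw ^ i) (fun k w s => c i * G i k w s + branch_poly L Zf k w i br (fun j => G j k w s)).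
  by apply: LRep_add; [exact: (LRep_mul (LRep_const (c i)) (HG i)) | exact: LRep_branch].
have H1 : LRep 0 (fun k w s => 1 - atomL k (i, None) w).
  apply: LRep_add; first exact: LRep_const.
  by apply: (LRep_ext _ (LRep_mul (LRep_const (-1)) hD)) => k w s; rewrite mulN1r.
apply: LRep_ext (LRep_add (LRep_mul hD (A true (ps_a L))) (LRep_mul H1 (A false (ps_b L)))).
by move=> k w s; rewrite ifE.
Qed.

Lemma LRep_Phi (l : seq 'I_m) :
  forall j : 'I_m, LRep (Kw ^ j) (fun k w s => foldl (stepf k w) s l j).
Proof.
elim/last_ind: l => [|l i IH] j; first exact: LRep_var.
have E j' k w s : foldl (stepf k w) s (rcons l i) j' =
   if j' == i then assign L Zf k w (fun j => foldl (stepf k w) s l j) i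
   else foldl (stepf k w) s l j'.
  by rewrite foldl_rcons /stepf /upd.
case: (eqVneq j i) => [->|ji].
  apply: LRep_ext (LRep_assign i IH) => k w s; by rewrite E eqxx.
by apply: LRep_ext (IH j) => k w s; rewrite E (negbTE ji).
Qed.

Lemma LRep_body (N : monomial m) : LRep (wt N) (fun k w s => mono_eval N (body L Zf k w s)).
Proof. exact: (LRep_mono N (LRep_Phi (enum 'I_m))). Qed.
End Alg.

Section Ex.
Context d (T : measurableType d) (R : realType) (P : probability T R).

Definition Ex (F : T -> R) : R := fine (\int[P]_w (F w)%:E).

Definition Int (F : T -> R) := P.-integrable setT (fun w => (F w)%:E).

Lemma Int_ext F G : (forall w, F w = G w) -> Int F -> Int G.
Proof. by move=> FG; rewrite /Int (_ : (fun w => (G w)%:E) = (fun w => (F w)%:E)) // funeqE => w; rewrite FG. Qed.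

Lemma Ex_ext F G : (forall w, F w = G w) -> Ex F = Ex G.
Proof. by move=> FG; rewrite /Ex; congr fine; apply: eq_integral => w _; rewrite FG. Qed.

Lemma Int_add F G : Int F -> Int G -> Int (fun w => F w + G w).
Proof.
move=> iF iG; rewrite /Int (_ : (fun w => (F w + G w)%:E) = (EFin \o F) \+ (EFin \o G)).
  exact: integrableD.
by rewrite funeqE => w; rewrite /= EFinD.
Qed.

Lemma Ex_add F G : Int F -> Int G -> Ex (fun w => F w + G w) = Ex F + Ex G.
Proof.
move=> iF iG; rewrite /Ex.
rewrite (_ : (fun w => (F w + G w)%:E) = (EFin \o F) \+ (EFin \o G)); last first.
  by rewrite funeqE => w; rewrite /= EFinD.
rewrite integralD_EFin //; rewrite fineD //; exact: integrable_fin_num.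
Qed.

Lemma Int_scale c F : Int F -> Int (fun w => c * F w).
Proof.
move=> iF; rewrite /Int (_ : (fun w => (c * F w)%:E) = (fun w => (c%:E * (F w)%:E)%E)).
  exact: integrableZl.
by rewrite funeqE => w; rewrite EFinM.
Qed.

Lemma Ex_scale c F : Int F -> Ex (fun w => c * F w) = c * Ex F.
Proof.
move=> iF; rewrite /Ex (_ : (fun w => (c * F w)%:E) = (fun w => (c%:E * (F w)%:E)%E)); last first.
  by rewrite funeqE => w; rewrite EFinM.
rewrite integralZl // fineM //; exact: integrable_fin_num.
Qed.

Lemma Int_cst c : Int (fun _ => c).
Proof. exact: finite_measure_integrable_cst. Qed.

Lemma Ex_cst c : Ex (fun _ => c) = c.
Proof. have H : (P : {measure set T -> \bar R}) [set: T] = 1%E by exact: probability_setT. by rewrite /Ex integral_cst // H mule1. Qed.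

Lemma Ex_sumZ (X : Type) (phi : X -> T -> R) (p : seq (R * X)) :
  (forall x, Int (phi x)) ->
  Int (fun w => \sum_(y <- p) y.1 * phi y.2 w) /\
  Ex (fun w => \sum_(y <- p) y.1 * phi y.2 w) = \sum_(y <- p) y.1 * Ex (phi y.2).
Proof.
move=> iphi; elim: p => [|y p [IHi IHe]].
  split.
    by apply: Int_ext (Int_cst 0) => w; rewrite big_nil.
  by rewrite big_nil (Ex_ext (G := fun _ => 0)) ?Ex_cst // => w; rewrite big_nil.
have E w : \sum_(y0 <- y :: p) y0.1 * phi y0.2 w =
   y.1 * phi y.2 w + \sum_(y0 <- p) y0.1 * phi y0.2 w by rewrite big_cons.
split; first by apply: Int_ext (Int_add (Int_scale _ (iphi _)) IHi) => w; rewrite E.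
rewrite (Ex_ext E) Ex_add ?Ex_scale ?IHe ?big_cons //; exact: Int_scale.
Qed.
End Ex.

Section GlobAlg.
Context {d} {T : measurableType d} {R : realType} {m : nat}.
Variables (L : prob_solvable R m) (Zf : rindex m -> T -> R).

Definition ridx (k : nat) (q : @LQ m) : rindex m := (k, q.1, q.2).
Definition Dit k := [seq ridx k q | q <- Dloc L].
Fixpoint Dg n := if n is n'.+1 then Dit n' ++ Dg n' else [::].

Definition atomG (r : rindex m) (w : T) : R := atomL Zf r.1.1 (r.1.2, r.2) w.
Definition evalG n (E : rindex m -> nat) w := \prod_(r <- Dg n) atomG r w ^+ E r.
Definition GRep n (F : T -> R) :=
  exists p : seq (R * (rindex m -> nat)), forall w, F w = \sum_(y <- p) y.1 * evalG n y.2 w.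

Lemma GRep_ext n F G : (forall w, F w = G w) -> GRep n F -> GRep n G.
Proof. by move=> FG [p Hp]; exists p => w; rewrite -FG. Qed.

Lemma GRep_const n c : GRep n (fun _ => c).
Proof.
exists [:: (c, fun _ => 0%N)] => w; rewrite big_seq1 /evalG /= big1 ?mulr1 //.
Qed.

Lemma GRep_add n F G : GRep n F -> GRep n G -> GRep n (fun w => F w + G w).
Proof. by move=> [p1 H1] [p2 H2]; exists (p1 ++ p2) => w; rewrite big_cat H1 H2. Qed.

Lemma evalGD n E E' w : evalG n (fun r => E r + E' r)%N w = evalG n E w * evalG n E' w.
Proof. by rewrite /evalG -big_split; apply: eq_bigr => r _; rewrite exprD. Qed.

Lemma GRep_mul n F G : GRep n F -> GRep n G -> GRep n (fun w => F w * G w).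
Proof.
move=> [p1 H1] [p2 H2].
exists [seq (y.1 * z.1, fun r => (y.2 r + z.2 r)%N) | y <- p1, z <- p2] => w.
rewrite H1 H2 big_allpairs_dep /= mulr_suml; apply: eq_bigr => y _.
rewrite mulr_sumr; apply: eq_bigr => z _; rewrite evalGD /=; ring.
Qed.

Lemma GRep_sum n (I : Type) (s : seq I) (F : I -> T -> R) :
  (forall i, GRep n (F i)) -> GRep n (fun w => \sum_(i <- s) F i w).
Proof.
move=> HF; elim: s => [|i s IH]; first by apply: GRep_ext (GRep_const n 0) => w; rewrite big_nil.
by apply: GRep_ext (GRep_add (HF i) IH) => w; rewrite big_cons.
Qed.

Lemma GRep_prod n (I : Type) (s : seq I) (F : I -> T -> R) :
  (forall i, GRep n (F i)) -> GRep n (fun w => \prod_(i <- s) F i w).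
Proof.
move=> HF; elim: s => [|i s IH]; first by apply: GRep_ext (GRep_const n 1) => w; rewrite big_nil.
by apply: GRep_ext (GRep_mul (HF i) IH) => w; rewrite big_cons.
Qed.

Lemma GRep_pow n F k : GRep n F -> GRep n (fun w => F w ^+ k).
Proof.
move=> HF; elim: k => [|k IH]; first by apply: GRep_ext (GRep_const n 1) => w; rewrite expr0.
by apply: GRep_ext (GRep_mul HF IH) => w; rewrite exprS.
Qed.

Lemma GRep_mono n (N : monomial m) (G : 'I_m -> T -> R) :
  (forall j, GRep n (G j)) -> GRep n (fun w => mono_eval N (fun j => G j w)).
Proof. by move=> HG; apply: GRep_prod => j; exact: GRep_pow. Qed.

Lemma Dg_lt n r : r \in Dg n -> (r.1.1 < n)%N.
Proof.
elim: n => [//|n IH] /=; rewrite mem_cat => /orP[/mapP[q _ ->] //|/IH].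
by move/ltn_trans; apply.
Qed.

Lemma Dit_fst k r : r \in Dit k -> r.1.1 = k.
Proof. by move=> /mapP[q _ ->]. Qed.

Lemma Dg_valid n r : r \in Dg n -> (r.1.2, r.2) \in Dloc L.
Proof.
elim: n => [//|n IH] /=; rewrite mem_cat => /orP[/mapP[q qD ->]|/IH //].
by case: q qD.
Qed.

Lemma ridx_inj k : injective (ridx k).
Proof. by move=> [i1 o1] [i2 o2] [-> ->]. Qed.

Lemma Dg_uniq n : uniq (Dg n).
Proof.
elim: n => [//|n IH] /=; rewrite cat_uniq IH andbT (map_inj_uniq (@ridx_inj n)) Dloc_uniq /=.
apply/hasPn => r /Dg_lt rlt; apply/negP => /Dit_fst req.
by move: rlt; rewrite req ltnn.
Qed.

Definition Eext n (e : @LQ m -> nat) (E : rindex m -> nat) (r : rindex m) : nat :=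
  if r.1.1 == n then e (r.1.2, r.2) else E r.

Lemma evalG_succ n e E w : evalG n.+1 (Eext n e E) w = evalL L Zf n e w * evalG n E w.
Proof.
rewrite /evalG /= big_cat /= big_map; congr (_ * _).
  by apply: eq_bigr => -[i o] _; rewrite /Eext /ridx /atomG /= eqxx.
apply: eq_big_seq => r /Dg_lt rlt; rewrite /Eext.
by case: eqP rlt => [->|//]; rewrite ltnn.
Qed.

Lemma GRep_lift n c e F : GRep n F -> GRep n.+1 (fun w => c * evalL L Zf n e w * F w).
Proof.
move=> [p Hp]; exists [seq (c * y.1, Eext n e y.2) | y <- p] => w.
rewrite Hp big_map mulr_sumr; apply: eq_bigr => y _; rewrite evalG_succ /=; ring.
Qed.

Lemma GRep_state n : forall j, GRep n (fun w => state L Zf n w j).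
Proof.
elim: n => [|n IH] j; first exact: GRep_const.
have [q [_ Hq]] := LRep_Phi L Zf (enum 'I_m) j.
apply: GRep_ext; first by move=> w; rewrite /= /body (Hq n w (state L Zf n w)).
apply: GRep_sum => x; rewrite /evalLT.
apply: GRep_lift; exact: (GRep_mono x.2 (G := fun j w => state L Zf n w j) IH).
Qed.

Lemma GRep_mono_rv (N : monomial m) n : GRep n (mono_rv L Zf N n).
Proof. exact: (GRep_mono N (G := fun j w => state L Zf n w j) (GRep_state n)). Qed.
End GlobAlg.

Section GlobProb.
Context {d} {T : measurableType d} {R : realType} {m : nat}.
Variables (L : prob_solvable R m) (P : probability T R) (Z : rindex m -> {RV P >-> R}).
Hypothesis HL : loop_model L P Z.
Local Notation Zf := (fun j => (Z j : T -> R)).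

Lemma mZ : forall i, measurable_fun setT (Zf i).
Proof. by move=> i; exact: measurable_funP. Qed.

Lemma indepZ : forall (J : seq (rindex m)) (B : rindex m -> set R), uniq J ->
    (forall j, j \in J -> measurable (B j)) ->
    P (\bigcap_(j in [set j | j \in J]) (Zf j @^-1` B j)) =
    (\prod_(j <- J) P (Zf j @^-1` B j))%E.
Proof. by case: HL => H _ _ _ _; exact: H. Qed.

Definition gr (r : rindex m) (e : nat) : R -> R :=
  fun x => (if r.2 is None then ((x == 1)%:R) else x) ^+ e.

Lemma atomG_gr r e w : atomG Zf r w ^+ e = gr r e (Zf r w).
Proof. by case: r => [[k i] [bt|]]. Qed.

Lemma eq1_indic (x : R) : ((x == 1)%:R : R) = \1_[set (1:R)] x.
Proof.
rewrite /indic; case: eqP => [->|h]; first by rewrite mem_set.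
by rewrite memNset.
Qed.

Lemma mgr r e : measurable_fun setT (gr r e).
Proof.
apply: measurable_funX; case: r.2 => [_|]; first exact: measurable_id.
rewrite (_ : (fun x : R => ((x == 1)%:R : R)) = \1_[set (1:R)]).
  exact: measurable_indic.
by rewrite funeqE => x; exact: eq1_indic.
Qed.

Lemma Igr r e : (r.1.2, r.2) \in Dloc L -> P.-integrable setT (fun w => (gr r e (Zf r w))%:E).
Proof.
case: r => [[k i] [[br t]|]] /= rD.
  rewrite Dloc_SomeP in rD.
  by case: HL => _ _ _ H _; exact: H.
apply: (@le_integrable _ _ _ P setT measurableT _ (EFin \o cst (1:R))).
- apply/measurable_EFinP; apply: measurableT_comp; first exact: (mgr (k, i, None) e).
  exact: mZ.
- move=> w _; rewrite /= lee_fin normr1 /gr /= normrX.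
  by apply: exprn_ile1 => //; case: eqP; rewrite ?normr1 ?normr0.
- exact: finite_measure_integrable_cst.
Qed.

Lemma EG n E : Int P (evalG L Zf n E) /\
  Ex P (evalG L Zf n E) = \prod_(r <- Dg L n) Ex P (fun w => atomG Zf r w ^+ E r).
Proof.
have uD := Dg_uniq L n.
have mg r : measurable_fun setT (gr r (E r)) by exact: mgr.
have ig r : r \in Dg L n -> P.-integrable setT (fun w => (gr r (E r) (Zf r w))%:E).
  by move=> rD; apply: Igr; exact: Dg_valid rD.
have eqE w : evalG L Zf n E w = \prod_(r <- Dg L n) gr r (E r) (Zf r w).
  by apply: eq_bigr => r _; rewrite atomG_gr.
split.
  by apply: Int_ext (prod_integrable mZ indepZ uD mg ig) => w; rewrite eqE.
have := P2 mZ indepZ uD mg ig (K := [::]) (f := fun _ _ => 1) erefl (fun k (H : k \in [::]) => ltac:(by []))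
   (fun _ => measurable_cst _) (fun _ _ => ler01) (fun k (H : k \in [::]) => ltac:(by [])).
move=> H.
rewrite /Ex (eq_integral (fun w => ((\prod_(r <- Dg L n) gr r (E r) (Zf r w)) * \prod_(k <- [::]) (fun _ _ => 1) k (Zf k w))%:E)); last first.
  by move=> w _; rewrite big_nil mulr1 eqE.
rewrite H /= big_nil mulr1; apply: eq_bigr => r _; congr fine; apply: eq_integral => w _.
by rewrite atomG_gr.
Qed.

Lemma EE F : Int P F -> ('E_P[F] = (Ex P F)%:E)%E.
Proof. by move=> iF; rewrite unlock /Ex fineK //; exact: integrable_fin_num. Qed.

Lemma Ex_sel k i e : Ex P (fun w => atomL Zf k (i, None) w ^+ e.+1) = ps_p L i.
Proof.
have mA : measurable (Zf (k, i, None) @^-1` [set (1:R)]).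
  by rewrite -[X in measurable X]setTI; apply: mZ => //; exact: measurable_set1.
rewrite (Ex_ext P (G := fun w => \1_(Zf (k, i, None) @^-1` [set (1:R)]) w)); last first.
  move=> w; rewrite /atomL /= eq1_indic.
  change (((\1_[set (1:R)] (Zf (k,i,None) w)) : R) ^+ e.+1 = (\1_[set (1:R)] (Zf (k,i,None) w) : R)).
  set b := \1_ _ _.
  have : b = 0 \/ b = 1 by rewrite /b /indic; case: (_ \in _); [right|left].
  by case=> ->; rewrite ?expr1n // expr0n.
rewrite /Ex integral_indic // setIT.
case: HL => _ H _ _ _.
have -> : (P : {measure set T -> \bar R}) (Zf (k, i, None) @^-1` [set (1:R)]) = (ps_p L i)%:E by exact: H.
by [].
Qed.

Lemma MC k q e : q \in Dloc L ->
  Ex P (fun w => atomL Zf k q w ^+ e) = Ex P (fun w => atomL Zf 0 q w ^+ e).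
Proof.
case: q => i [[br t]|] qD.
  rewrite Dloc_SomeP in qD.
  case: HL => _ _ _ _ H; have := H k 0%N i br t e qD.
  by rewrite !unlock /Ex /atomL /= => ->.
case: e => [|e]; last by rewrite !Ex_sel.
by rewrite (Ex_ext P (G := fun _ => 1)) ?(Ex_ext P (F := fun w => atomL Zf 0 (i, None) w ^+ 0) (G := fun _ => 1)).
Qed.

Definition mu (e : @LQ m -> nat) : R :=
  \prod_(q <- Dloc L) Ex P (fun w => atomL Zf 0 q w ^+ e q).

Lemma GRep_Int n F : GRep L Zf n F -> Int P F.
Proof.
move=> [p Hp]; apply: Int_ext; last first.
  exact: (Ex_sumZ (phi := evalG L Zf n) p (fun E => (EG n E).1)).1.
by move=> w; rewrite Hp.
Qed.

Lemma ER n e F : GRep L Zf n F ->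
  Int P (fun w => evalL L Zf n e w * F w) /\
  Ex P (fun w => evalL L Zf n e w * F w) = mu e * Ex P F.
Proof.
move=> HF; split.
  apply: GRep_Int; apply: GRep_ext (GRep_lift 1 e HF) => w; by rewrite mul1r.
case: HF => p Hp.
have -> : Ex P (fun w => evalL L Zf n e w * F w) =
    Ex P (fun w => \sum_(y <- [seq (y.1, Eext n e y.2) | y <- p]) y.1 * evalG L Zf n.+1 y.2 w).
  apply: Ex_ext => w; rewrite big_map Hp mulr_sumr; apply: eq_bigr => y _.
  by rewrite evalG_succ mulrCA.
rewrite (Ex_sumZ (phi := fun E => evalG L Zf n.+1 E) _ (fun E => (EG n.+1 E).1)).2.
rewrite (Ex_ext P Hp) (Ex_sumZ (phi := evalG L Zf n) p (fun E => (EG n E).1)).2.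
rewrite big_map mulr_sumr; apply: eq_bigr => y _.
rewrite (EG n.+1 _).2 (EG n _).2 /= big_cat /= big_map.
have -> : \prod_(j <- Dloc L) Ex P (fun w => atomG Zf (ridx n j) w ^+ Eext n e y.2 (ridx n j)) = mu e.
  rewrite /mu big_seq [RHS]big_seq; apply: eq_bigr => q qD.
  rewrite -(MC n) //; apply: Ex_ext => w.
  by case: q qD => i o _; rewrite /Eext /ridx /atomG /= eqxx.
have -> : \prod_(r <- Dg L n) Ex P (fun w => atomG Zf r w ^+ Eext n e y.2 r) =
          \prod_(r <- Dg L n) Ex P (fun w => atomG Zf r w ^+ y.2 r).
  apply: eq_big_seq => r /Dg_lt rlt; apply: Ex_ext => w; rewrite /Eext.
  by case: eqP rlt => [->|//]; rewrite ltnn.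
by rewrite mulrCA.
Qed.

Lemma Rec (N : monomial m) (q : seq (@LT R m)) n :
  (forall k w s, mono_eval N (body L Zf k w s) = \sum_(x <- q) evalLT L Zf k w s x) ->
  Int P (mono_rv L Zf N n.+1) /\
  Ex P (mono_rv L Zf N n.+1) = \sum_(x <- q) x.1.1 * mu x.1.2 * Ex P (mono_rv L Zf x.2 n).
Proof.
move=> Hq.
set phi := fun (x : @LT R m) w => evalL L Zf n x.1.2 w * mono_rv L Zf x.2 n w.
have iphi x : Int P (phi x) by exact: (ER x.1.2 (GRep_mono_rv L Zf x.2 n)).1.
have E w : mono_rv L Zf N n.+1 w = \sum_(y <- [seq (x.1.1, x) | x <- q]) y.1 * phi y.2 w.
  by rewrite /mono_rv /= Hq big_map; apply: eq_bigr => x _; rewrite /evalLT /phi -mulrA.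
have [H1 H2] := Ex_sumZ [seq (x.1.1, x) | x <- q] iphi.
split; first exact: Int_ext H1.
rewrite (Ex_ext P E) H2 big_map; apply: eq_bigr => x _.
by rewrite /phi (ER x.1.2 (GRep_mono_rv L Zf x.2 n)).2 mulrA.
Qed.
End GlobProb.

Unset Implicit Arguments. Set Strict Implicit.

Lemma eq_big_all (R : realType) (X : Type) (q : seq X) (Pr : pred X) (F G : X -> R) :
  all Pr q -> (forall x, Pr x -> F x = G x) -> \sum_(x <- q) F x = \sum_(x <- q) G x.
Proof.
move=> + FG; elim: q => [|x q IH]; first by rewrite !big_nil.
by rewrite /= => /andP[px pq]; rewrite !big_cons FG // IH.
Qed.

Lemma big_pred1_uniq (R : realType) (I : eqType) (s : seq I) (a : I) (F : I -> R) :
  uniq s -> a \in s -> \sum_(i <- s | a == i) F i = F a.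
Proof.
move=> us aS; rewrite (big_rem a) //= eqxx big_seq_cond big1 ?addr0 //.
move=> i /andP[iin /eqP ai]; move: iin; by rewrite -ai mem_rem_uniqF.
Qed.

Section Mon.
Context {R : realType} {m : nat} (L : prob_solvable R m) (W : nat).
Definition mkm (f : {ffun 'I_m -> 'I_W.+1}) : monomial m := [ffun j => nat_of_ord (f j)].
Definition Smon : seq (monomial m) :=
  [seq N <- [seq mkm f | f <- enum {ffun 'I_m -> 'I_W.+1}] | (wt L N <= W)%N].

Lemma Smon_uniq : uniq Smon.
Proof.
apply: filter_uniq; rewrite map_inj_uniq ?enum_uniq // => f g /ffunP H.
by apply/ffunP => j; apply: val_inj; have := H j; rewrite !ffunE.
Qed.

Lemma Smon_mem N : (N \in Smon) = (wt L N <= W)%N.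
Proof.
rewrite mem_filter; case: leqP => //= NW.
have Nj j : (N j < W.+1)%N.
  rewrite ltnS; apply: leq_trans NW; apply: (@leq_trans (N j * Kw L ^ j)%N).
    by rewrite leq_pmulr // expn_gt0 Kw_gt0.
  by rewrite /wt (bigD1 j) //= leq_addr.
apply/mapP; exists [ffun j => inord (N j)]; first by rewrite mem_enum.
by apply/ffunP => j; rewrite !ffunE inordK.
Qed.
End Mon.

Theorem mainTheorem1 (d : measure_display) (T : measurableType d) (R : realType)
    (m : nat) (L : prob_solvable R m) (P : probability T R)
    (Z : rindex m -> {RV P >-> R}) (M : monomial m) :
  loop_model L P Z ->
  exists (S : seq (monomial m)) (c : monomial m -> monomial m -> R)
         (e : monomial m -> R),
    [/\ M \in S,
        (forall N n, N \in S ->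
           P.-integrable setT (fun w => (mono_rv L (fun j => Z j : T -> R) N n w)%:E))
      & (forall N n, N \in S ->
           ('E_P[mono_rv L (fun j => Z j : T -> R) N n.+1] =
            \sum_(N' <- S) (c N N')%:E * 'E_P[mono_rv L (fun j => Z j : T -> R) N' n]
              + (e N)%:E)%E)].
Proof.
move=> HL.
set Zf := fun j => Z j : T -> R.
set W := wt L M.
pose qf N := sval (cid (LRep_body L Zf N)).
have qfP N := svalP (cid (LRep_body L Zf N)).
exists (Smon L W), (fun N N' => \sum_(x <- qf N | x.2 == N') x.1.1 * mu L Z x.1.2), (fun _ => 0).
split.
- by rewrite Smon_mem.
- move=> N n _; exact: (GRep_Int HL (GRep_mono_rv L Zf N n)).
move=> N n NS.
have [qa qe] := qfP N.
have [I1 E1] := Rec HL n qe.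
rewrite (EE I1) E1.
rewrite (eq_bigr (fun N' => (\sum_(x <- qf N | x.2 == N') x.1.1 * mu L Z x.1.2 * Ex P (mono_rv L Zf N' n))%:E)); last first.
  move=> N' _; rewrite (EE (GRep_Int HL (GRep_mono_rv L Zf N' n))) -EFinM mulr_suml.
  done.
rewrite sumEFin -EFinD addr0; congr (_%:E).
under [RHS]eq_bigr do rewrite big_mkcond.
rewrite exchange_big /=; apply: eq_big_all qa _ => x xw.
rewrite -big_mkcond /=.
rewrite big_pred1_uniq //.
  exact: Smon_uniq.
rewrite Smon_mem; apply: leq_trans xw _; by rewrite -Smon_mem.
Qed.
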